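(* Let $X$ be a digraph and $S\subset V(X)$ such that no arc with exactly one end in $S$ lies in a digon. Then $X$ and the local reversal of $X$ at $S$ have the same $H$-spectrum.
   Context: A digraph $X$ has a finite vertex set and an arc set of ordered pairs of distinct vertices; $\{x,y\}$ is a digon if both $xy,yx$ are arcs. $H(X)$ has $(u,v)$-entry $1$ if $uv$ and $vu$ are arcs, $i$ if only $uv$ is an arc, $-i$ if only $vu$ is an arc, and $0$ otherwise; two digraphs have the same $H$-spectrum if their Hermitian adjacency matrices have the same characteristic polynomial. The local reversal of $X$ at $S$ is the digraph obtained by replacing every arc $xy$ with exactly one end in $S$ by its converse $yx$ (arcs with both or no ends in $S$ are unchanged). *)

(* Defs.v *)
From HB Require Import structures.
From mathcomp Require Import all_boot all_order all_algebra all_field.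
Set Implicit Arguments. Unset Strict Implicit. Unset Printing Implicit Defensive.
Import GRing.Theory Num.Theory.
Local Open Scope ring_scope.

(* A digraph on the vertex set 'I_n is an arc relation [arc : rel 'I_n];
   arcs join distinct vertices, i.e. [arc] is irreflexive (a hypothesis). *)
Definition digraph_loopless (n : nat) (arc : rel 'I_n) : Prop :=
  forall x, ~~ arc x x.

Definition hermAdj (n : nat) (arc : rel 'I_n) : 'M[algC]_n :=
  \matrix_(u, v)
    (if arc u v && arc v u then 1
     else if arc u v then 'i
     else if arc v u then - 'i
     else 0).

Definition local_reversal (n : nat) (arc : rel 'I_n) (S : {set 'I_n}) : rel 'I_n :=
  fun x y => if (x \in S) != (y \in S) then arc y x else arc x y.

Definition same_H_spectrum (n : nat) (a1 a2 : rel 'I_n) : Prop :=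
  char_poly (hermAdj a1) = char_poly (hermAdj a2).

(* Main.v *)
Require Import Defs.
From HB Require Import structures.
From mathcomp Require Import all_boot all_order all_algebra all_field.
Import GRing.Theory Num.Theory.
Local Open Scope ring_scope.

Theorem proposition8p2 (n : nat) (arc : rel 'I_n) (S : {set 'I_n}) :
  digraph_loopless arc ->
  (forall x y, arc x y -> (x \in S) != (y \in S) -> ~~ arc y x) ->
  same_H_spectrum arc (local_reversal arc S).
Proof.
move=> _ Hd.
pose d : 'rV[{poly algC}]_n := \row_i ((-1) ^+ (i \in S)).
have key : char_poly_mx (hermAdj (local_reversal arc S)) =
   diag_mx d *m char_poly_mx (hermAdj arc) *m diag_mx d.
  rewrite mul_mx_diag mul_diag_mx; apply/matrixP => i j.
  rewrite !mxE.
  case: (eqVneq i j) => [->|nij].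
    rewrite /local_reversal eqxx /= mulr1n.
    by rewrite mulrC mulrA -expr2 -exprM mulnC exprM sqrrN !expr1n mul1r.
  rewrite mulr0n !sub0r /local_reversal.
  case: (boolP ((i \in S) != (j \in S))) => hs.
    have Hij := Hd i j.
    have hs' : (j \in S) != (i \in S) by rewrite eq_sym.
    have hm : (-1) ^+ (i \in S) * (-1) ^+ (j \in S) = -1 :> {poly algC}.
      by move: hs; case: (i \in S) (j \in S) => [] [] //= _;
        rewrite ?expr1 ?expr0 ?mulN1r ?mulr1 ?mul1r.
    rewrite hs' /= mulrC mulrA (mulrC _ ((-1) ^+ _)) hm mulN1r opprK.
    have Hji := Hd i j.
    case Aij: (arc i j); case Aji: (arc j i) => /=.
    - by move: (Hij Aij hs); rewrite Aji.
    1-3: by rewrite ?polyCN ?opprK ?oppr0.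
  move: hs; rewrite negbK => /eqP hs; rewrite hs eqxx /=.
  by rewrite mulrC mulrA -expr2 -exprM mulnC exprM sqrrN !expr1n mul1r.
rewrite /same_H_spectrum /char_poly key !det_mulmx det_diag.
rewrite mulrC mulrA -big_split /= big1 ?mul1r // => i _.
by rewrite mxE -expr2 -exprM mulnC exprM sqrrN !expr1n.
Qed.
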